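(* For any nonempty metric spaces $X$ and $Y$, $d_{GH}(X,Y)=d^{ls}_{GH}(X,Y)$.
   Context: For a metric space, $|xy|$ denotes the distance between $x$ and $y$. A set-valued map $f:X\rightrightarrows Y$ assigns to each $x\in X$ a nonempty subset $f(x)\subseteq Y$; it is identified with its graph $\bigcup_{x\in X}\{x\}\times f(x)\subseteq X\times Y$. A correspondence between $X$ and $Y$ is a subset $R\subseteq X\times Y$ whose projections to $X$ and to $Y$ are both surjective; it is regarded as the set-valued map $x\mapsto R(x)=\{y:(x,y)\in R\}$, and $R^{-1}=\{(y,x):(x,y)\in R\}$ is a correspondence between $Y$ and $X$. $\mathcal R(X,Y)$ is the set of all correspondences. The distortion of a nonempty relation $\sigma\subseteq X\times Y$ is $\operatorname{dis}\sigma=\sup\{||xx'|-|yy'||:(x,y),(x',y')\in\sigma\}\in[0,\infty]$. The Gromov–Hausdorff distance is $d_{GH}(X,Y)=\frac12\inf\{\operatorname{dis}R:R\in\mathcal R(X,Y)\}$ (this agrees with the usual definition via isometric embeddings). A set-valued map $f:X\rightrightarrows Y$ of topological spaces is lower semicontinuous if for every $x\in X$ and every open $U\subseteq Y$ with $f(x)\cap U\neq\emptyset$ there is a neighborhood $V$ of $x$ with $f(x')\cap U\ne\emptyset$ for all $x'\in V$. $\mathcal R_{ls}(X,Y)$ is the set of $R\in\mathcal R(X,Y)$ such that both $R:X\rightrightarrows Y$ and $R^{-1}:Y\rightrightarrows X$ are lower semicontinuous, and $d^{ls}_{GH}(X,Y)=\frac12\inf\{\operatorname{dis}R:R\in\mathcal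 R_{ls}(X,Y)\}$. *)

(* Defs.v *)
From HB Require Import structures.
From mathcomp Require Import all_boot all_order all_algebra.
From mathcomp Require Import all_classical all_reals all_analysis.
Set Implicit Arguments. Unset Strict Implicit. Unset Printing Implicit Defensive.
Import Order.TTheory GRing.Theory Num.Theory.
Local Open Scope classical_set_scope.
Local Open Scope ring_scope.

Record MetricSpace (R : realType) := {
  mcarrier :> Type;
  mdist : mcarrier -> mcarrier -> R;
  mdist_ge0 : forall x y, 0 <= mdist x y;
  mdist_eq0 : forall x y, mdist x y = 0 <-> x = y;
  mdist_sym : forall x y, mdist x y = mdist y x;
  mdist_tri : forall x y z, mdist x z <= mdist x y + mdist y z }.

Arguments mdist {R} m x y.

Section GH.
Variable R : realType.

Definition dis (X Y : MetricSpace R) (sigma : set (X * Y)) : \bar R :=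
  ereal_sup [set (`| mdist X pq.1.1 pq.2.1 - mdist Y pq.1.2 pq.2.2 |)%:E
            | pq in [set pq : (X * Y) * (X * Y) | sigma pq.1 /\ sigma pq.2]].

Definition correspondence (X Y : MetricSpace R) (S : set (X * Y)) : Prop :=
  (forall x : X, exists y : Y, S (x, y)) /\ (forall y : Y, exists x : X, S (x, y)).

Definition mopen (Y : MetricSpace R) (U : set Y) : Prop :=
  forall y, U y -> exists2 r : R, 0 < r & forall z, mdist Y y z < r -> U z.

Definition mnbhs (X : MetricSpace R) (x : X) (V : set X) : Prop :=
  exists2 r : R, 0 < r & forall z, mdist X x z < r -> V z.

Definition lsc (X Y : MetricSpace R) (F : X -> set Y) : Prop :=
  forall (x : X) (U : set Y), mopen U -> F x `&` U !=set0 ->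
    exists V : set X, mnbhs x V /\ forall x', V x' -> F x' `&` U !=set0.

Definition corr_map (X Y : MetricSpace R) (S : set (X * Y)) : X -> set Y :=
  fun x => [set y | S (x, y)].
Definition corr_inv_map (X Y : MetricSpace R) (S : set (X * Y)) : Y -> set X :=
  fun y => [set x | S (x, y)].

Definition ls_correspondence (X Y : MetricSpace R) (S : set (X * Y)) : Prop :=
  correspondence S /\ lsc (corr_map S) /\ lsc (corr_inv_map S).

Definition dGH (X Y : MetricSpace R) : \bar R :=
  ((2%:R)^-1)%:E * ereal_inf [set dis S | S in [set S | @correspondence X Y S]].

Definition dGH_ls (X Y : MetricSpace R) : \bar R :=
  ((2%:R)^-1)%:E * ereal_inf [set dis S | S in [set S | @ls_correspondence X Y S]].
End GH.

(* Main.v *)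
Require Import Defs.
From mathcomp Require Import all_boot all_order all_algebra.
From mathcomp Require Import all_classical all_reals all_analysis.
From mathcomp Require Import lra.
Import Order.TTheory GRing.Theory Num.Theory.
Local Open Scope classical_set_scope.
Local Open Scope ring_scope.

Section Proof.
Variable R : realType.
Variables X Y : MetricSpace R.

Definition thick (S : set (X * Y)) (e : R) : set (X * Y) :=
  fun p => exists2 q, S q & Defs.mdist X p.1 q.1 < e /\ Defs.mdist Y p.2 q.2 < e.

Lemma thick_ls (S : set (X * Y)) e : correspondence S -> 0 < e ->
  ls_correspondence (thick S e).
Proof.
move=> [SX SY] e0; split; [|split].
- split.
  + move=> x; have [y Sxy] := SX x; exists y; exists (x, y) => //=.
    by rewrite !(proj2 (mdist_eq0 _ _) erefl).
  + move=> y; have [x Sxy] := SY y; exists x; exists (x, y) => //=.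
    by rewrite !(proj2 (mdist_eq0 _ _) erefl).
- move=> x U _ [y [[q Sq [h1 h2]] Uy]].
  exists (fun z => Defs.mdist X x z < e - Defs.mdist X x q.1); split.
  + by exists (e - Defs.mdist X x q.1); rewrite ?subr_gt0.
  + move=> x' hx'; exists y; split => //; exists q => //; split => //=.
    have := mdist_tri x' x q.1; rewrite mdist_sym in hx'.
    move: hx'; rewrite /= in h1 *; lra.
- move=> y U _ [x [[q Sq [h1 h2]] Ux]].
  exists (fun z => Defs.mdist Y y z < e - Defs.mdist Y y q.2); split.
  + by exists (e - Defs.mdist Y y q.2); rewrite ?subr_gt0.
  + move=> y' hy'; exists x; split => //; exists q => //; split => //=.
    have := mdist_tri y' y q.2; rewrite mdist_sym in hy'.
    move: hy'; rewrite /= in h2 *; lra.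
Qed.

Lemma thick_dis (S : set (X * Y)) e : 0 < e ->
  (dis (thick S e) <= dis S + (4 * e)%:E)%E.
Proof.
move=> e0; apply: ub_ereal_sup => _ [[[x1 y1] [x2 y2]] [/= [q1 S1 [a1 b1]] [q2 S2 [a2 b2]]] <-].
have hq : ((`| Defs.mdist X q1.1 q2.1 - Defs.mdist Y q1.2 q2.2 |)%:E <= dis S)%E.
  by apply: ereal_sup_ubound; exists (q1, q2).
apply: (@le_trans _ _ ((`| Defs.mdist X q1.1 q2.1 - Defs.mdist Y q1.2 q2.2 |)%:E + (4 * e)%:E)%E); last first.
  exact: leeD2r.
rewrite -EFinD lee_fin /=.
have t1 := mdist_tri x1 q1.1 x2; have t2 := mdist_tri q1.1 q2.1 x2.
have t3 := mdist_tri q1.1 x1 q2.1; have t4 := mdist_tri x1 x2 q2.1.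
have u1 := mdist_tri y1 q1.2 y2; have u2 := mdist_tri q1.2 q2.2 y2.
have u3 := mdist_tri q1.2 y1 q2.2; have u4 := mdist_tri y1 y2 q2.2.
have s1 := mdist_sym x1 q1.1; have s2 := mdist_sym x2 q2.1.
have s3 := mdist_sym y1 q1.2; have s4 := mdist_sym y2 q2.2.
rewrite /= in a1 b1 a2 b2.
set A := Defs.mdist X x1 x2; set B := Defs.mdist Y y1 y2.
set C := Defs.mdist X q1.1 q2.1; set D := Defs.mdist Y q1.2 q2.2.
rewrite -/A -/C in t1 t2 t3 t4; rewrite -/B -/D in u1 u2 u3 u4.
case: (lerP B A) => hAB; case: (lerP D C) => hCD;
  rewrite ?(ger0_norm (subr_ge0 _ _)) ?(ltr0_norm (subr_lt0 _ _)) //;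
  rewrite ?ger0_norm ?ltr0_norm ?subr_ge0 ?subr_lt0 //; lra.
Qed.

End Proof.

Theorem mainTheorem1 (R : realType) (X Y : MetricSpace R) :
  inhabited X -> inhabited Y -> dGH X Y = dGH_ls X Y.
Proof.
move=> _ _; rewrite /dGH /dGH_ls; congr (_ * _)%E.
apply/eqP; rewrite eq_le; apply/andP; split.
- apply: ereal_inf_le_tmp => _ [S [HS _] <-]; by exists S.
- apply: le_ereal_inf_tmp => _ [S HS <-].
  apply/lee_addgt0Pr => e e0.
  have e40 : 0 < e / 4 by rewrite divr_gt0.
  have hls : @ls_correspondence R X Y (@thick R X Y S (e / 4)).
    exact: (@thick_ls R X Y S _ HS e40).
  have h1 : (ereal_inf [set dis S0 | S0 in [set S0 | @ls_correspondence R X Y S0]] <= dis (@thick R X Y S (e / 4)))%E.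
    apply: ereal_inf_lbound. by exists (@thick R X Y S (e / 4)).
  have h2 := @thick_dis R X Y S _ e40.
  have h3 : (4 * (e / 4)) = e by rewrite mulrC divfK // pnatr_eq0.
  rewrite h3 in h2.
  exact: (Order.POrderTheory.le_trans h1 h2).
Qed.
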